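(* Let $\pi$ be a positive probability density on $\mathbb{R}^d$ with $\log\pi\in C^1(\mathbb{R}^d)$ and let $\mu_\sigma$ be a symmetric probability density on $\mathbb{R}^d$ ($\mu_\sigma(z)=\mu_\sigma(-z)$). Let $P^R$ be the Metropolis--Hastings kernel with target $\pi$ and candidate $y=x+z$, $z\sim\mu_\sigma$. Let $\check P^B$ be the Metropolis--Hastings kernel with target $\pi$ and candidate generated by drawing $z\sim\mu_\sigma$, setting $\check b=1$ with probability $\check p(x,z)=1/(1+e^{-z^T\nabla\log\pi(x)})$ and $\check b=-1$ otherwise, and proposing $y=x+\check b z$. Then $\mathrm{Gap}(P^R)\ge\mathrm{Gap}(\check P^B)/2$.
   Context: Metropolis--Hastings kernel with target $\pi$ and candidate density $q(x,y)$: propose $y\sim q(x,\cdot)$ and accept with probability $\min\{1,\pi(y)q(y,x)/(\pi(x)q(x,y))\}$, else stay. $\mathrm{Gap}(P)=\inf_{f\in L^2_{0,1}(\pi)}\frac12\int (f(y)-f(x))^2\pi(dx)P(x,dy)$ with $L^2_{0,1}(\pi)=\{f:\mathbb{E}_\pi f=0,\mathrm{Var}_\pi f=1\}$. *)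

(* Defs.v *)
(* R^d is represented by row vectors 'rV[R]_d. *)
From HB Require Import structures.
From mathcomp Require Import all_boot all_order all_algebra.
From mathcomp Require Import all_classical all_reals all_analysis.
Set Implicit Arguments. Unset Strict Implicit. Unset Printing Implicit Defensive.
Import Order.TTheory GRing.Theory Num.Theory.
Import numFieldNormedType.Exports.
Local Open Scope classical_set_scope.
Local Open Scope ring_scope.

Definition rV_display : measure_display. Proof. exact: default_measure_display. Qed.

Section measurable_rV.
Context (R : realType) (d : nat).
Definition rV_coord : 'I_d -> 'rV[R]_d -> R := fun i x => x ord0 i.

Let rV_set0 : g_sigma_preimage rV_coord set0.
Proof. exact: sigma_algebra0. Qed.
Let rV_setC A : g_sigma_preimage rV_coord A -> g_sigma_preimage rV_coord (~` A).
Proof. exact: sigma_algebraC. Qed.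
Let rV_bigcup (F : _^nat) : (forall i, g_sigma_preimage rV_coord (F i)) ->
  g_sigma_preimage rV_coord (\bigcup_i (F i)).
Proof. exact: sigma_algebra_bigcup. Qed.

(* the product (= Borel) sigma-algebra generated by the coordinates *)
HB.instance Definition _ := @isMeasurable.Build rV_display
  'rV[R]_d (g_sigma_preimage rV_coord) rV_set0 rV_setC rV_bigcup.
End measurable_rV.

Fixpoint lebesgue_rV (R : realType) (d : nat) : set 'rV[R]_d -> \bar R :=
  match d with
  | 0 => fun A => \d_(0 : 'rV[R]_0) A
  | d'.+1 => fun A =>
      ((@lebesgue_measure R) \x (@lebesgue_rV R d'))%E
        ((fun p : R * 'rV[R]_d' => (row_mx (\row_(j < 1) p.1) p.2 : 'rV[R]_d'.+1)) @^-1` A)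
  end.

Section MH.
Context (R : realType) (d : nat).
Local Notation Rd := 'rV[R]_d.
Local Notation leb := (@lebesgue_rV R d).

Definition prob_density (p : Rd -> R) : Prop :=
  [/\ measurable_fun setT p, (forall x, 0 <= p x) & (\int[leb]_x (p x)%:E = 1)%E].

Definition gradient (f : Rd -> R) (x : Rd) : Rd :=
  \row_(i < d) 'D_(delta_mx ord0 i : Rd) f x.

Definition dotp (u v : Rd) : R := \sum_(i < d) u ord0 i * v ord0 i.

Definition C1 (f : Rd -> R) : Prop :=
  (forall x, differentiable f x) /\ continuous (gradient f).

Definition mh_accept (pi : Rd -> R) (q : Rd -> Rd -> R) (x y : Rd) : R :=
  Num.min 1 ((pi y * q y x) / (pi x * q x y)).

Definition mh_kernel (pi : Rd -> R) (q : Rd -> Rd -> R) (x : Rd) (A : set Rd)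
  : \bar R :=
  ((\int[leb]_(y in A) (q x y * mh_accept pi q x y)%:E)
   + (1 - \int[leb]_y (q x y * mh_accept pi q x y)%:E) * (\1_A x)%:E)%E.

Definition Epi (pi : Rd -> R) (f : Rd -> R) : \bar R :=
  (\int[leb]_x (f x * pi x)%:E)%E.
Definition Varpi (pi : Rd -> R) (f : Rd -> R) : \bar R :=
  (\int[leb]_x (((f x - fine (Epi pi f)) ^+ 2) * pi x)%:E)%E.

Definition L2_01 (pi : Rd -> R) : set (Rd -> R) :=
  [set f | [/\ measurable_fun setT f, Epi pi f = 0%E & Varpi pi f = 1%E]].

Definition Gap (pi : Rd -> R) (P : Rd -> set Rd -> \bar R) : \bar R :=
  ereal_inf [set ((2^-1)%:E *
      \int[leb]_x ((pi x)%:E * \int[P x]_y ((f y - f x) ^+ 2)%:E))%E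
    | f in L2_01 pi].

Definition q_RW (mu : Rd -> R) (x y : Rd) : R := mu (y - x).

Definition p_check (pi : Rd -> R) (x z : Rd) : R :=
  1 / (1 + expR (- dotp z (gradient (fun u => ln (pi u)) x))).

(* density of y = x + b z, z ~ mu, b = 1 w.p. p_check(x,z), b = -1 otherwise:
   contribution of b = 1 (z = y - x) plus contribution of b = -1 (z = x - y) *)
Definition q_check (pi mu : Rd -> R) (x y : Rd) : R :=
  mu (y - x) * p_check pi x (y - x) + mu (x - y) * (1 - p_check pi x (x - y)).

End MH.

(* Main.v *)
Require Import Defs.
From HB Require Import structures.
From mathcomp Require Import all_boot all_order all_algebra.
From mathcomp Require Import all_classical all_reals all_analysis.
From mathcomp Require Import ring lra.
Import Order.TTheory GRing.Theory Num.Theory.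
Import numFieldNormedType.Exports.
Local Open Scope classical_set_scope.
Local Open Scope ring_scope.

Module Helpers.
Set Implicit Arguments. Unset Strict Implicit. Unset Printing Implicit Defensive.
Import HBNNSimple.

Section generic.
Local Open Scope ereal_scope.
Context d (T : measurableType d) (R : realType).

Definition nnI (mu : set T -> \bar R) (f : T -> \bar R) :=
  ereal_sup [set sintegral mu h |
    h in [set h : {nnsfun T >-> R} | forall x, (h x)%:E <= f x]].

Lemma integralE' mu D f :
  integral mu D f = nnI mu (f \_ D)^\+ - nnI mu (f \_ D)^\-.
Proof. by []. Qed.

Lemma nnI_mono mu f g : (forall x, f x <= g x) -> nnI mu f <= nnI mu g.
Proof.
move=> fg; apply: ge_ereal_sup => _ [h hf <-]; apply: ereal_sup_ubound.
by exists h => // x; exact: le_trans (hf x) (fg x).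
Qed.

Lemma sintegralE' mu (h : {nnsfun T >-> R}) : mu set0 = 0 ->
  sintegral mu h = \sum_(x \in range h) x%:E * mu (h @^-1` [set x]).
Proof.
move=> mu0; rewrite (fsbig_widen (range h) setT)//= => x [_ Nfx] /=.
by rewrite preimage10// mu0 mule0.
Qed.

Lemma sintegral_zero mu (h : {nnsfun T >-> R}) : mu set0 = 0 ->
  (forall t, h t = 0%R) -> sintegral mu h = 0.
Proof.
move=> mu0 h0; rewrite sintegralE' // fsbig1 // => r [t _ <-].
by rewrite h0 mul0e.
Qed.

Lemma nnI_ge0 mu f : mu set0 = 0 -> (forall x, 0 <= f x) -> 0 <= nnI mu f.
Proof.
move=> mu0 f0; apply: ereal_sup_ubound; exists nnsfun0 => //.
exact: sintegral_zero.
Qed.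

Lemma nnI0 mu : mu set0 = 0 -> nnI mu (cst 0) = 0.
Proof.
move=> mu0; apply/eqP; rewrite eq_le nnI_ge0 // andbT.
apply: ge_ereal_sup => _ [h /= h0 <-]; rewrite sintegral_zero // => t.
by apply/eqP; rewrite eq_le fun_ge0 andbT -lee_fin; exact: h0.
Qed.

Lemma integral_nn mu D f : mu set0 = 0 -> (forall x, 0 <= f x) ->
  integral mu D f = nnI mu (f \_ D).
Proof.
move=> mu0 f0; rewrite integralE'.
have fD0 x : 0 <= (f \_ D) x by rewrite /patch; case: ifP.
have -> : (f \_ D)^\- = cst 0.
  by apply/funext => x; rewrite (@ge0_funenegE _ _ setT) ?inE // => y _; exact: fD0.
have -> : (f \_ D)^\+ = f \_ D.
  by apply/funext => x; rewrite (@ge0_funeposE _ _ setT) ?inE // => y _; exact: fD0.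
by rewrite nnI0 // sube0.
Qed.

Lemma mulemu_ge0' (mu : set T -> \bar R) (h : {nnsfun T >-> R}) x :
  mu set0 = 0 -> (forall A, 0 <= mu A) -> 0 <= x%:E * mu (h @^-1` [set x]).
Proof.
move=> mu0 mu_ge0; have [x0|x0] := leP 0%R x.
  by rewrite mule_ge0.
rewrite preimage10 ?mu0 ?mule0// => -[t _ xE].
by move: x0; rewrite -xE ltNge fun_ge0.
Qed.

Lemma sintegralrM' (mu : set T -> \bar R) (r : R) (h : {nnsfun T >-> R}) :
  mu set0 = 0 -> (forall A, 0 <= mu A) -> (0 < r)%R ->
  sintegral mu (cst r \* h)%R = r%:E * sintegral mu h.
Proof.
move=> mu0 mu_ge0 r0.
rewrite !sintegralET ge0_mule_fsumr; last by move=> i; exact: mulemu_ge0'.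
rewrite (reindex_fsbigT ( *%R r))/=; last first.
  by exists ( *%R r^-1); [apply: mulKf; rewrite gt_eqF|apply: mulVKf; rewrite gt_eqF].
apply: eq_fsbigr => x; rewrite preimage_cstM ?gt_eqF// [(_ / r)%R]mulrC mulKf ?gt_eqF//.
by rewrite EFinM muleA.
Qed.

Lemma nnI_scale mu f (k : R) : mu set0 = 0 -> (forall A, 0 <= mu A) ->
  (0 < k)%R -> nnI mu (fun x => k%:E * f x) <= k%:E * nnI mu f.
Proof.
move=> mu0 mu_ge0 k0; apply: ge_ereal_sup => _ [h hf <-].
have k'0 : (0 <= k^-1)%R by rewrite invr_ge0 ltW.
pose h' := scale_nnsfun h k'0.
have hE : sintegral mu h = sintegral mu (cst k \* h')%R.
  apply: eq_sintegral => t /=; rewrite mulrA divff ?gt_eqF// mul1r//.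
rewrite hE sintegralrM' //; apply: lee_wpmul2l; first by rewrite lee_fin ltW.
apply: ereal_sup_ubound; exists h' => // t /=.
have := lee_wpmul2l (_ : 0 <= k^-1%:E) (hf t); rewrite lee_fin => /(_ k'0).
have -> : k^-1%:E * (k%:E * f t) = f t.
  by rewrite muleA -EFinM mulVf ?gt_eqF// mul1e.
by rewrite -EFinM.
Qed.

Lemma nnI_le2 (m1 m2 : set T -> \bar R) (g : T -> \bar R) (x0 : T) :
  m1 set0 = 0 -> m2 set0 = 0 -> g x0 = 0 ->
  (forall A, ~ A x0 -> 0 <= m2 A) ->
  (forall A, ~ A x0 -> m1 A <= 2%:E * m2 A) ->
  nnI m1 g <= 2%:E * nnI m2 g.
Proof.
move=> m10 m20 gx0 m2ge0 m12; apply: ge_ereal_sup => _ [h hg <-].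
have nx0 r : r != 0%R -> ~ (h @^-1` [set r]) x0.
  move=> r0 /= hx0; move: r0; rewrite -hx0 => r0.
  have := hg x0; rewrite /= gx0 lee_fin => hle.
  by move: r0; rewrite eq_le hle (@fun_ge0 _ _ h x0).
have G0 i : 0 <= i%:E * m2 (h @^-1` [set i]).
  have [->|i0] := eqVneq i 0%R; first by rewrite mul0e.
  have [[t _ hti]|Nr] := pselect (range h i).
    apply: mule_ge0; first by rewrite lee_fin -hti (@fun_ge0 _ _ h t).
    by apply: m2ge0; exact: nx0.
  by rewrite preimage10 // m20 mule0.
apply: (@le_trans _ _ (2%:E * sintegral m2 h)).
  rewrite !sintegralE' // ge0_mule_fsumr // lee_fsum //.
  move=> r [t _ htr].
  have [->|r0] := eqVneq r 0%R; first by rewrite !mul0e mule0.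
  rewrite muleCA; apply: lee_wpmul2l; first by rewrite lee_fin -htr (@fun_ge0 _ _ h t).
  exact/m12/nx0.
apply: lee_wpmul2l => //; apply: ereal_sup_ubound; by exists h.
Qed.

End generic.

Lemma min_ge0 (R : realType) (t : R) : 0 <= t -> 0 <= Num.min 1 t.
Proof. by move=> t0; rewrite le_min ler01 t0. Qed.

Lemma abstract_ineq (R : realType) (a b m px py : R) :
  0 < px -> 0 < py -> 0 <= a -> a <= 2 * m -> 0 <= b -> b <= 2 * m ->
  a * Num.min 1 (py * b / (px * a)) <= 2 * (m * Num.min 1 (py * m / (px * m))).
Proof.
move=> px0 py0 a0 a2m b0 b2m.
have m0 : 0 <= m by lra.
have [meq|mn0] := eqVneq m 0.
  subst m; have -> : a = 0 by lra.
  by rewrite !mul0r mulr0.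
have mp : 0 < m by rewrite lt_neqAle eq_sym mn0 m0.
have -> : py * m / (px * m) = py / px.
  by field; rewrite ?gt_eqF ?mn0 ?andbT.
have [aeq|an0] := eqVneq a 0.
  subst a; by rewrite mul0r mulr_ge0 ?mulr_ge0 ?min_ge0 ?divr_ge0 ?ltW.
have ap : 0 < a by rewrite lt_neqAle eq_sym an0 a0.
have L1 : a * Num.min 1 (py * b / (px * a)) <= 2 * m.
  apply: le_trans a2m; rewrite -[leRHS]mulr1 ler_wpM2l //.
  by rewrite ge_min lexx.
have L2 : a * Num.min 1 (py * b / (px * a)) <= 2 * m * (py / px).
  apply: (@le_trans _ _ (a * (py * b / (px * a)))).
    by rewrite ler_wpM2l // ge_min lexx orbT.
  have -> : a * (py * b / (px * a)) = b * (py / px).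
    by field; rewrite ?gt_eqF ?an0 ?andbT.
  by rewrite ler_wpM2r // divr_ge0 ?ltW.
move: L1 L2; set u := a * _ => L1 L2.
rewrite mulrA /Order.min; case: ifP => _ //.
by rewrite mulr1.
Qed.

Lemma leb_props (R : realType) (d : nat) :
  (@lebesgue_rV R d set0 = 0%E) /\ (forall A, (0 <= @lebesgue_rV R d A)%E).
Proof.
elim: d => [|d [IH0 IHge0]].
  split; last by move=> A /=; rewrite diracE lee_fin.
  by rewrite /= diracE in_set0.
split => [|A] /=; rewrite /product_measure1.
  rewrite preimage_set0.
  rewrite (_ : (fun x => _) = cst 0%E); first exact: integral0.
  by apply/funext => x /=; rewrite xsection0 IH0.
by apply: integral_ge0 => x _ /=.
Qed.

Section kern.
Context (R : realType) (d : nat).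
Local Notation Rd := 'rV[R]_d.
Local Open Scope ereal_scope.

Let leb0 : @lebesgue_rV R d set0 = 0. Proof. by case: (leb_props R d). Qed.
Let lebge0 A : 0 <= @lebesgue_rV R d A. Proof. by case: (leb_props R d). Qed.

Lemma kernel_notin (pi : Rd -> R) (q : Rd -> Rd -> R) x A :
  (forall y, (0 <= q x y * mh_accept pi q x y)%R) -> ~ A x ->
  mh_kernel pi q x A =
  nnI (@lebesgue_rV R d) ((fun y => (q x y * mh_accept pi q x y)%:E) \_ A).
Proof.
move=> g0 nAx; rewrite /mh_kernel indicE memNset // mule0 adde0.
by rewrite integral_nn // => y; rewrite lee_fin.
Qed.

Lemma kernel0 (pi : Rd -> R) (q : Rd -> Rd -> R) x :
  (forall y, (0 <= q x y * mh_accept pi q x y)%R) ->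
  mh_kernel pi q x set0 = 0.
Proof.
move=> g0; rewrite kernel_notin //.
rewrite (_ : _ \_ set0 = cst 0); first exact: nnI0.
by apply/funext => y; rewrite /patch in_set0.
Qed.

Lemma kernel_ge0 (pi : Rd -> R) (q : Rd -> Rd -> R) x A :
  (forall y, (0 <= q x y * mh_accept pi q x y)%R) -> ~ A x ->
  0 <= mh_kernel pi q x A.
Proof.
move=> g0 nAx; rewrite kernel_notin //; apply: nnI_ge0 => // y.
by rewrite /patch; case: ifP => // _; rewrite lee_fin.
Qed.

Lemma kernel_le2 (pi : Rd -> R) (q1 q2 : Rd -> Rd -> R) x A :
  (forall y, (0 <= q1 x y * mh_accept pi q1 x y)%R) ->
  (forall y, (0 <= q2 x y * mh_accept pi q2 x y)%R) ->
  (forall y, (q1 x y * mh_accept pi q1 x y <= 2 * (q2 x y * mh_accept pi q2 x y))%R) ->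
  ~ A x -> mh_kernel pi q1 x A <= 2%:E * mh_kernel pi q2 x A.
Proof.
move=> g1 g2 g12 nAx; rewrite !kernel_notin //.
apply: le_trans (nnI_scale _ _ _ _) => //; apply: nnI_mono => y.
rewrite /patch; case: ifP => _; last by rewrite mule0.
by rewrite -EFinM lee_fin.
Qed.

End kern.

Section pt.
Context (R : realType) (d : nat).
Local Notation Rd := 'rV[R]_d.

Lemma p_check_01 (pi : Rd -> R) x z : 0 <= p_check pi x z /\ p_check pi x z <= 1.
Proof.
rewrite /p_check; set E := expR _.
have E0 : 0 < E by rewrite expR_gt0.
have D0 : 0 < 1 + E by lra.
split; first by rewrite divr_ge0 ?ltW.
by rewrite ler_pdivrMr // mul1r; lra.
Qed.

Lemma aux_bound (m a b : R) : 0 <= m -> 0 <= a -> a <= 1 -> 0 <= b -> b <= 1 ->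
  0 <= m * a + m * (1 - b) /\ m * a + m * (1 - b) <= 2 * m.
Proof.
move=> m0 p1 p2 p3 p4.
have h1 : m * a <= m by rewrite -[leRHS]mulr1 ler_wpM2l.
have h2 : m * (1 - b) <= m by rewrite -[leRHS]mulr1 ler_wpM2l // lerBlDr lerDl.
have h3 : 0 <= m * a by rewrite mulr_ge0.
have h4 : 0 <= m * (1 - b) by rewrite mulr_ge0 // subr_ge0.
split; lra.
Qed.

Lemma q_check_bound (pi mu : Rd -> R) x y :
  (forall z, 0 <= mu z) -> (forall z, mu z = mu (- z)) ->
  0 <= q_check pi mu x y /\ q_check pi mu x y <= 2 * mu (y - x).
Proof.
move=> mu0 musym; rewrite /q_check.
have -> : mu (x - y) = mu (y - x) by rewrite musym opprB.
have [p1 p2] := p_check_01 pi x (y - x).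
have [p3 p4] := p_check_01 pi x (x - y).
exact: aux_bound.
Qed.

Lemma pointwise (pi mu : Rd -> R) x y :
  (forall x, 0 < pi x) -> (forall z, 0 <= mu z) -> (forall z, mu z = mu (- z)) ->
  [/\ 0 <= q_check pi mu x y * mh_accept pi (q_check pi mu) x y,
      0 <= q_RW mu x y * mh_accept pi (q_RW mu) x y &
      q_check pi mu x y * mh_accept pi (q_check pi mu) x y <=
      2 * (q_RW mu x y * mh_accept pi (q_RW mu) x y)].
Proof.
move=> pi0 mu0 musym.
have [a0 a2] := q_check_bound pi x y mu0 musym.
have [b0 b2] := q_check_bound pi y x mu0 musym.
have mE : mu (x - y) = mu (y - x) by rewrite musym opprB.
rewrite mE in b2.
rewrite /mh_accept /q_RW mE.
move: a0 a2 b0 b2 (pi0 x) (pi0 y) (mu0 (y - x)).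
move: (q_check pi mu x y) (q_check pi mu y x) (pi x) (pi y) (mu (y - x)) => a b px py m.
move=> a0 a2 b0 b2 px0 py0 m0.
split.
- by rewrite mulr_ge0 // min_ge0 // divr_ge0 // mulr_ge0 // ltW.
- by rewrite mulr_ge0 // min_ge0 // divr_ge0 // mulr_ge0 // ltW.
- exact: abstract_ineq.
Qed.

End pt.

End Helpers.
Import Helpers.

Theorem proposition3p3 (R : realType) (d : nat) (pi mu : 'rV[R]_d -> R) :
  prob_density pi -> (forall x, 0 < pi x) -> C1 (fun x => ln (pi x)) ->
  prob_density mu -> (forall z, mu z = mu (- z)) ->
  ((2^-1)%:E * Gap pi (mh_kernel pi (q_check pi mu))
     <= Gap pi (mh_kernel pi (q_RW mu)))%E.
Proof.
move=> _ pi0 _ [_ mu0 _] musym.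
have [leb0 lebge0] := leb_props R d.
have PT x y := pointwise x y pi0 mu0 musym.
have gB x y : 0 <= q_check pi mu x y * mh_accept pi (q_check pi mu) x y.
  by case: (PT x y).
have gR x y : 0 <= q_RW mu x y * mh_accept pi (q_RW mu) x y.
  by case: (PT x y).
have gBR x y : q_check pi mu x y * mh_accept pi (q_check pi mu) x y <=
      2 * (q_RW mu x y * mh_accept pi (q_RW mu) x y).
  by case: (PT x y).
rewrite /Gap.
apply: le_ereal_inf_tmp => _ [f Lf <-].
pose g x := fun y => ((f y - f x) ^+ 2)%:E.
have g_ge0 x y : (0 <= g x y)%E by rewrite lee_fin sqr_ge0.
have IBge0 x : (0 <= nnI (mh_kernel pi (q_check pi mu) x) (g x))%E.
  by apply: nnI_ge0 => //; exact: kernel0.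
have IRge0 x : (0 <= nnI (mh_kernel pi (q_RW mu) x) (g x))%E.
  by apply: nnI_ge0 => //; exact: kernel0.
have XE (q : 'rV[R]_d -> 'rV[R]_d -> R) : (forall x y, 0 <= q x y * mh_accept pi q x y) ->
  (\int[@lebesgue_rV R d]_x ((pi x)%:E * \int[mh_kernel pi q x]_y ((f y - f x) ^+ 2)%:E) =
   nnI (@lebesgue_rV R d) (fun x => (pi x)%:E * nnI (mh_kernel pi q x) (g x)))%E.
  move=> gq.
  have IE x : (\int[mh_kernel pi q x]_y ((f y - f x) ^+ 2)%:E =
            nnI (mh_kernel pi q x) (g x))%E.
    rewrite integral_nn; [by rewrite patch_setT | exact: kernel0 | move=> y; exact: g_ge0 x y].
  rewrite (_ : (fun x => _) = (fun x => (pi x)%:E * nnI (mh_kernel pi q x) (g x))%E); last first.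
    by apply/funext => x; rewrite IE.
  rewrite integral_nn; [by rewrite patch_setT | exact: leb0 | move=> x].
  apply: mule_ge0; first by rewrite lee_fin ltW.
  by apply: nnI_ge0 => //; exact: kernel0.
rewrite !XE //.
apply: (@le_trans _ _ ((2^-1)%:E * ((2^-1)%:E *
   nnI (@lebesgue_rV R d) (fun x => (pi x)%:E * nnI (mh_kernel pi (q_check pi mu) x) (g x))))%E).
  apply: lee_wpmul2l; first by rewrite lee_fin invr_ge0.
  by apply: ereal_inf_lbound; exists f => //; rewrite XE.
apply: lee_wpmul2l; first by rewrite lee_fin invr_ge0.
set XB := nnI _ _; set XR := nnI _ _.
suff H : (XB <= 2%:E * XR)%E.
  apply: (@le_trans _ _ ((2^-1)%:E * (2%:E * XR))%E).
    by apply: lee_wpmul2l => //; rewrite lee_fin invr_ge0.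
  by rewrite muleA -EFinM mulVf // mul1e.
rewrite /XB /XR.
apply: le_trans (nnI_scale _ leb0 lebge0 _); last by [].
apply: nnI_mono => x; rewrite muleCA.
apply: lee_wpmul2l; first by rewrite lee_fin ltW.
apply: (nnI_le2 (x0 := x)).
- exact: kernel0.
- exact: kernel0.
- by rewrite /g /= subrr expr0n.
- by move=> A nA; exact: kernel_ge0.
- by move=> A nA; exact: kernel_le2.
Qed.
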